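(* An orientation of a graph $G$ admits a homogeneous labeling if and only if it contains no badly oriented cycle.
   Context: Given an orientation of a (simple) graph $G$, a homogeneous labeling is an assignment of real labels to the arcs such that for every vertex all its outgoing arcs have the same label, all its incoming arcs have the same label, and (if both exist) the label of its incoming arcs is smaller than the label of its outgoing arcs. A cycle $(v_0,v_1,\ldots,v_{n-1})$ of $G$ (indices mod $n$) is badly oriented if there is a vertex $v_i$ whose incident cycle arcs are $v_{i-1}v_i$ and $v_iv_{i+1}$ (i.e. oriented from $v_{i-1}$ to $v_i$ and from $v_i$ to $v_{i+1}$), and there is no vertex $v_j$ whose incident cycle arcs are $v_{j+1}v_j$ and $v_jv_{j-1}$. *)

(* Defs.v *)
From mathcomp Require Import all_boot.
From Stdlib Require Import Rdefinitions.
Set Implicit Arguments. Unset Strict Implicit. Unset Printing Implicit Defensive.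

Definition simple_graph (T : finType) (e : rel T) : Prop :=
  symmetric e /\ irreflexive e.

(* An orientation o of e: every arc is an edge, and every edge gets exactly
   one direction. [o x y] means the arc goes from x to y. *)
Definition orientation (T : finType) (e o : rel T) : Prop :=
  (forall x y, o x y -> e x y) /\
  (forall x y, e x y -> (o x y (+) o y x)).

(* A homogeneous labeling: l x y is the label of arc xy (values on non-arcs
   are irrelevant). *)
Definition homogeneous_labeling (T : finType) (o : rel T)
    (l : T -> T -> R) : Prop :=
  forall v : T,
    (forall u w, o v u -> o v w -> l v u = l v w) /\
    (forall u w, o u v -> o w v -> l u v = l w v) /\
    (forall u w, o u v -> o v w -> Rlt (l u v) (l v w)).

Definition graph_cycle (T : finType) (e : rel T) (c : seq T) : Prop :=
  [/\ 3 <= size c, uniq c & cycle e c].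

Definition badly_oriented (T : finType) (o : rel T) (c : seq T) : Prop :=
  (exists2 x, x \in c & o (prev c x) x && o x (next c x)) /\
  ~ (exists2 x, x \in c & o (next c x) x && o x (prev c x)).

(* Main.v *)
Require Import Defs.
From mathcomp Require Import all_boot zify.
From Stdlib Require Import Rdefinitions Reals.
Set Implicit Arguments. Unset Strict Implicit. Unset Printing Implicit Defensive.

Lemma split_dup (A B : eqType) (f : A -> B) (s : seq A) : ~~ uniq (map f s) ->
  exists s1 x s2 y s3, s = s1 ++ x :: s2 ++ y :: s3 /\ f x = f y.
Proof.
elim: s => //= z s IH; rewrite negb_and negbK => /orP[/mapP[y ys fzy]|/IH].
  case/splitPr: ys => s2 s3. by exists [::], z, s2, y, s3.
move=> [s1 [x [s2 [y [s3 [-> fxy]]]]]]. by exists (z :: s1), x, s2, y, s3.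
Qed.

Section Dir2.
Variables (T : finType) (e o : rel T).
Hypotheses (He : simple_graph e) (Ho : orientation e o).

Definition NB (p1 p2 : T * T) := [&& p1.2 == p2.1, e p2.1 p2.2 & o p1.1 p1.2 || o p2.1 p2.2].
Definition FW (p1 p2 : T * T) := [&& p1.2 == p2.1, o p1.1 p1.2 & o p2.1 p2.2].
Definition good (q : seq (T * T)) :=
  if q is a :: s then sorted NB q && FW (last a s) a else false.

Lemma FW_NB p1 p2 : FW p1 p2 -> NB p1 p2.
Proof.
by rewrite /FW /NB => /and3P[-> H1 H2]; rewrite (proj1 Ho _ _ H2) H1.
Qed.

Lemma goodE s1 x s3 : good (s1 ++ x :: s3) =
  sorted NB (s1 ++ x :: s3) && FW (last x s3) (head x s1).
Proof. by case: s1 => //= a s1; rewrite last_cat. Qed.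

Lemma good_split q : good q -> ~~ uniq (map snd q) ->
  exists q', good q' /\ size q' < size q.
Proof.
have [Hsym Hirr] := He.
move=> Hg /split_dup [s1 [x [s2 [y [s3 [Eq fxy]]]]]].
move: Hg; rewrite {1}Eq goodE sorted_cat_cons => /andP[/andP[H1 Hp] Hc].
rewrite cat_path /= in Hp. case/and3P: Hp => Hp2 H3 H4.
rewrite last_cat /= in Hc.
case: s2 Eq Hp2 H3 => [|b t] Eq Hp2 H3.
  case/and3P: H3 => /= /eqP E1 E2 _.
  by move: E2; rewrite -E1 /= fxy Hirr.
case/andP: Hp2 => Nxb Hpb.
have Hin : good (b :: rcons t y) -> exists q', good q' /\ size q' < size q.
  move=> G; exists (b :: rcons t y); split => //.
  rewrite Eq /= !size_cat /= ?size_cat ?size_rcons /=; lia.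
have Hout : good (s1 ++ x :: s3) -> exists q', good q' /\ size q' < size q.
  move=> G; exists (s1 ++ x :: s3); split => //.
  rewrite Eq !size_cat /= ?size_cat /=; lia.
case/and3P: Nxb => /eqP Exb eb Oxb.
case: s3 Eq H4 Hc Hin Hout => [|c s3] Eq H4 Hc Hin Hout /=.
  case/and3P: Hc => /eqP Eya Oy Oa.
  case/orP: Oxb => Oxb.
    apply: Hout; rewrite goodE sorted_cat_cons /= H1 /= /FW Oxb Oa andbT.
    by rewrite andbT fxy Eya.
  apply: Hin; change (path NB b (rcons t y) && FW (last b (rcons t y)) b).
  rewrite rcons_path last_rcons (_ : path NB b t = true) //= H3 /=.
  by rewrite /FW Oy Oxb -Exb fxy eqxx.
case/andP: H4 => Nyc Hpc.
case/and3P: (Nyc) => /eqP Eyc ec Oyc.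
case Oxc : (o x.1 x.2 || o c.1 c.2).
  apply: Hout; rewrite goodE sorted_cat_cons H1 Hc andbT /=.
  rewrite (_ : path NB c s3 = true) // andbT /NB ec Oxc andbT.
  by rewrite andbT fxy Eyc.
move/negbT: Oxc; rewrite negb_or => /andP[/negbTE Ox /negbTE Oc].
rewrite Ox /= in Oxb; rewrite Oc orbF in Oyc.
apply: Hin; change (path NB b (rcons t y) && FW (last b (rcons t y)) b).
rewrite rcons_path last_rcons (_ : path NB b t = true) //= H3 /=.
by rewrite /FW Oyc Oxb -Exb fxy eqxx.
Qed.


Lemma good_min n q : size q <= n -> good q ->
  exists q', good q' /\ uniq (map snd q').
Proof.
elim: n q => [|n IH] q Hs Hg.
  by case: q Hs Hg.
case U: (uniq (map snd q)); first by exists q.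
have [q' [Hg' Hs']] := good_split Hg (negbT U).
by apply: (IH q') => //; rewrite -ltnS (leq_trans Hs').
Qed.

Lemma oxor x y : e x y -> o x y = ~~ o y x.
Proof. by move=> /(proj2 Ho x y); case: (o x y); case: (o y x). Qed.

Lemma good_bad q : good q -> uniq (map snd q) ->
  graph_cycle e (map snd q) /\ badly_oriented o (map snd q).
Proof.
have [Hsym Hirr] := He.
case: q => [//|a s] Hg Uc.
have S3 : 2 < size (map snd (a :: s)).
  move: (Hg) => /andP[Hp Hf]; rewrite size_map.
  case: s Hp Hf {Hg Uc} => [|b [|z s]] //= Hp Hf.
    move: Hf; rewrite /FW => /and3P[/eqP E O _].
    by move: (proj1 Ho _ _ O); rewrite E Hirr.
  move: Hp Hf; rewrite /FW /NB andbT => /and3P[/eqP E1 _ _] /and3P[/eqP E2 O1 O2].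
  move: (proj1 Ho _ _ O2) => eab.
  by move: (oxor eab); rewrite O2 -E2 E1 O1.
set q := a :: s in Hg Uc *. set c := map snd q.
have Uq : uniq q := map_uniq Uc.
move: (Hg) => /andP[Hp Hf].
have Cq : cycle NB q.
  by rewrite /q /= rcons_path (_ : path NB a s = true) //= FW_NB.
have nextq : forall p, p \in q -> next c p.2 = (next q p).2.
  move=> p pq; case/rot_to: pq => i s' E.
  rewrite -(next_rot i Uq) -(next_rot i Uc) /c -map_rot E /=.
  by case: s' E => [|z s'] E /=; rewrite !eqxx.
have prevq : forall p, p \in q -> prev c p.2 = p.1.
  move=> p pq. set p' := prev q p.
  have p'q : p' \in q by rewrite mem_prev.
  have Np : next q p' = p by rewrite /p' next_prev.
  have /and3P[/eqP E _ _] := next_cycle Cq p'q.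
  rewrite Np in E. by rewrite -{1}Np -nextq // prev_next // E.
split.
  split => //.
  - rewrite /c cycle_map; apply: sub_cycle Cq => p1 p2 /and3P[/eqP E H _].
    by rewrite /= E.
split.
  have lq : last a s \in q by exact: mem_last.
  exists (last a s).2; first by apply: map_f.
  rewrite prevq // nextq //.
  have -> : next q (last a s) = a.
    by rewrite next_nth lq /q index_last //= nth_default.
  by case/and3P: Hf => /eqP -> -> ->.
case=> x /mapP[p pq ->]; rewrite prevq // nextq //.
set n := next q p.
have /and3P[/eqP E en O] := next_cycle Cq pq.
rewrite -/n in E en O.
move=> /andP[O1 O2].
move: O; rewrite (oxor en) -E O1 /=.
have epp : e p.1 p.2 by rewrite Hsym; exact: (proj1 Ho _ _ O2).
by rewrite (oxor epp) O2.
Qed.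
End Dir2.
Section Dir1.
Local Open Scope R_scope.
Variables (T : finType) (e o : rel T) (l : T -> T -> R).
Hypotheses (He : simple_graph e) (Ho : orientation e o) (Hl : homogeneous_labeling o l).

Definition Rleb (a b : R) : bool := if Rle_dec a b then true else false.
Lemma RlebP a b : Rleb a b -> a <= b.
Proof. by rewrite /Rleb; case: Rle_dec. Qed.
Lemma RlebI a b : a <= b -> Rleb a b.
Proof. by rewrite /Rleb; case: Rle_dec. Qed.

Lemma path_bounds (L : T -> R) a t : path (fun u v => Rleb (L u) (L v)) a t ->
  forall u, u \in a :: t -> L a <= L u /\ L u <= L (last a t).
Proof.
elim: t a => [|b t IH] a /=.
  by move=> _ u; rewrite inE => /eqP ->; split; apply: Rle_refl.
move=> /andP[/RlebP Hab Hp] u; rewrite inE => /orP[/eqP->|Hu].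
  have [_ H2] := IH b Hp b (mem_head _ _).
  by split; [apply: Rle_refl| apply: Rle_trans Hab H2].
have [H1 H2] := IH b Hp u Hu. by split => //; apply: Rle_trans Hab H1.
Qed.

Lemma or_xor x y : e x y -> (o x y = ~~ o y x).
Proof. by move=> /(proj2 Ho x y); case: (o x y); case: (o y x). Qed.

Lemma dir1 c : graph_cycle e c -> badly_oriented o c -> False.
Proof.
case: c => [[]//|x0 s]; set c := x0 :: s.
case=> Hs Uc Cc [[x1 x1c Hf] Hnb].
have [Hsym Hirr] := He.
pose L x := if o x (next c x) then l x (next c x) else l (next c x) x.
have step : forall x, x \in c -> L x <= L (next c x).
  move=> x xc. set y := next c x. set z := next c y.
  have yc : y \in c by rewrite mem_next.
  have pxy : prev c y = x by rewrite /y prev_next.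
  have exy : e x y := next_cycle Cc xc.
  have eyz : e y z := next_cycle Cc yc.
  have nb : ~~ (o z y && o y x).
    apply/negP => H; apply: Hnb; exists y => //; by rewrite pxy.
  rewrite /L -/y -/z.
  have [H1 [H2 H3]] := Hl y.
  move: nb; rewrite (or_xor exy) (or_xor eyz).
  case Oyx: (o y x); case Ozy: (o z y) => //= _.
  - by rewrite (H1 x z) //; [apply: Rle_refl | rewrite (or_xor eyz) Ozy].
  - by rewrite (H2 x z) //; [apply: Rle_refl | rewrite (or_xor exy) Oyx].
  - by apply: Rlt_le; apply: H3; rewrite ?(or_xor exy) ?(or_xor eyz) ?Oyx ?Ozy.
have Cy : cycle (fun u v => Rleb (L u) (L v)) c.
  by apply: cycle_from_next => // x xc; apply: RlebI; apply: step.
have allle : forall u v, u \in c -> v \in c -> L u <= L v.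
  move: Cy => /= Hp u v uc vc.
  have uc' : u \in x0 :: rcons s x0 by rewrite inE mem_rcons in_cons orbA orbb -in_cons.
  have vc' : v \in x0 :: rcons s x0 by rewrite inE mem_rcons in_cons orbA orbb -in_cons.
  have [A1 A2] := path_bounds Hp uc'.
  have [B1 B2] := path_bounds Hp vc'.
  rewrite last_rcons in A2. by apply: Rle_trans A2 B1.
set w := prev c x1.
have wc : w \in c by rewrite mem_prev.
have nw : next c w = x1 by rewrite /w next_prev.
move/andP: Hf => [Hw Hx].
have [_ [_ H3]] := Hl x1.
have := allle _ _ x1c wc.
rewrite /L nw Hw Hx => Hle.
have := H3 _ _ Hw Hx => Hlt.
by apply: (Rlt_irrefl (l w x1)); apply: Rlt_le_trans Hlt Hle.
Qed.
End Dir1.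

Section Lab.
Variables (T : finType) (e o : rel T).
Hypotheses (He : simple_graph e) (Ho : orientation e o).
Hypothesis Hnone : ~ exists c, graph_cycle e c /\ badly_oriented o c.

Local Notation rle := (connect (NB e o)).
Definition rlt (p r : T * T) := [exists p', exists r', [&& rle p p', FW o p' r' & rle r' r]].

Lemma lt_irr p : ~~ rlt p p.
Proof.
apply/negP => /existsP[p' /existsP[r' /and3P[H1 H2 H3]]].
have /connectP[s Hp Hl] : rle r' p' by apply: connect_trans H3 H1.
apply: Hnone.
have Hg : good e o (r' :: s) by rewrite /good; apply/andP; split => //; rewrite -Hl.
have [q [Hq Uq]] := good_min He (leqnn _) Hg.
exists (map snd q); by have := good_bad He Ho Hq Uq.
Qed.

Lemma le_lt a b c : rle a b -> rlt b c -> rlt a c.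
Proof.
move=> H /existsP[p' /existsP[r' /and3P[H1 H2 H3]]].
apply/existsP; exists p'; apply/existsP; exists r'.
by rewrite H2 H3 !andbT; apply: connect_trans H H1.
Qed.

Lemma lt_le a b c : rlt a b -> rle b c -> rlt a c.
Proof.
move=> /existsP[p' /existsP[r' /and3P[H1 H2 H3]]] H.
apply/existsP; exists p'; apply/existsP; exists r'.
by rewrite H2 H1 /=; apply: connect_trans H3 H.
Qed.

Lemma ltW a b : rlt a b -> rle a b.
Proof.
move=> /existsP[p' /existsP[r' /and3P[H1 H2 H3]]].
apply: connect_trans H1 _; apply: connect_trans _ H3.
by apply: connect1; apply: FW_NB Ho _ _ H2.
Qed.

Definition lab (u v : T) : R := INR #|[pred r | rlt r (u, v)]|.

Lemma lab_eq a b : rle a b -> rle b a -> lab a.1 a.2 = lab b.1 b.2.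
Proof.
move=> H1 H2; rewrite /lab; congr INR; apply: eq_card => r /=.
rewrite !inE -!surjective_pairing.
by apply/idP/idP => H; [apply: lt_le H H1 | apply: lt_le H H2].
Qed.

Lemma lab_lt a b : rlt a b -> Rlt (lab a.1 a.2) (lab b.1 b.2).
Proof.
move=> H; rewrite /lab; apply: lt_INR; apply/ltP; apply: proper_card.
apply/properP; split.
  apply/subsetP => r; rewrite !inE -!surjective_pairing => Hr.
  by apply: lt_le Hr (ltW H).
exists a; rewrite !inE -!surjective_pairing //; exact: lt_irr.
Qed.
End Lab.

Theorem mainTheorem14 (T : finType) (e o : rel T) :
  simple_graph e -> orientation e o ->
  ((exists l : T -> T -> R, homogeneous_labeling o l) <->
   ~ (exists c : seq T, graph_cycle e c /\ badly_oriented o c)).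
Proof.
move=> He Ho; split.
  by move=> [l Hl] [c [Hc Hb]]; apply: (dir1 He Ho Hl Hc Hb).
move=> Hnone.
have [Hsym Hirr] := He.
have eo : forall x y, o x y -> e y x.
  by move=> x y H; rewrite Hsym; apply: (proj1 Ho).
have Hrle : forall a b, (NB e o) a b -> connect (NB e o) a b by move=> a b; apply: connect1.
exists (lab e o) => v; split; [|split].
- move=> u w Hu Hw.
  have S : forall u w, o v u -> o v w -> connect (NB e o) (v, u) (v, w).
    move=> u' w' Hu' Hw'; apply: connect_trans (Hrle (v,u') (u',v) _) (Hrle _ (v,w') _).
      by rewrite /NB /= eqxx eo //= Hu'.
    by rewrite /NB /= eqxx Hsym eo //= Hw' orbT.
  exact: (lab_eq (S u w Hu Hw) (S w u Hw Hu)).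
- move=> u w Hu Hw.
  have S : forall u w, o u v -> o w v -> connect (NB e o) (u, v) (w, v).
    move=> u' w' Hu' Hw'; apply: connect_trans (Hrle (u',v) (v,w') _) (Hrle _ (w',v) _).
      by rewrite /NB /= eqxx eo //= Hu'.
    by rewrite /NB /= eqxx Hsym eo //= Hw' orbT.
  exact: (lab_eq (S u w Hu Hw) (S w u Hw Hu)).
- move=> u w Hu Hw.
  apply: (lab_lt He Ho Hnone (a := (u, v)) (b := (v, w))).
  apply/existsP; exists (u, v); apply/existsP; exists (v, w).
  by rewrite !connect0 /FW /= eqxx Hu Hw.
Qed.
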